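(* For every $\alpha>-\mu$ there exists $\gamma(\alpha)>0$ such that for every $N\in\mathbb N$ we have $\sum_{k=1}^{N-1}\frac{1}{\nu_{k,N}+\alpha}\leq\gamma(\alpha)$.
   Context: Fix $\mu>1$. For $N\in\mathbb N$ and $k\in\{0,\dots,N-1\}$ let $\nu_{k,N}=\mu\frac{\sin^2(k\pi/N)}{\sin^2(\pi/N)}$ (the eigenvalues of the discrete Laplacian $K_N$ on $\mathbb R^N$ with periodic boundary conditions, $(K_Nx)_k=\frac{\mu}{4\sin^2(\pi/N)}(2x_k-x_{k+1}-x_{k-1})$). An empty sum is $0$. *)

(* Defs.v *)
From Stdlib Require Import Reals.
Open Scope R_scope.

Definition nu (mu : R) (k N : nat) : R :=
  mu * (sin (INR k * PI / INR N))^2 / (sin (PI / INR N))^2.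

Fixpoint sum_range (f : nat -> R) (a n : nat) : R :=
  match n with
  | O => 0
  | S n' => f a + sum_range f (S a) n'
  end.

Definition sum_1_to_Nm1 (f : nat -> R) (N : nat) : R := sum_range f 1 (N - 1).

(* Main.v *)
Require Import Defs.
From Stdlib Require Import Reals Lra Lia Psatz.
Open Scope R_scope.

Lemma sin_cubic (a : R) : 0 <= a -> a <= PI -> a - a^3/6 <= sin a.
Proof.
intros H1 H2. pose proof (sin_bound a 0 H1 H2) as [H _].
unfold sin_approx, sin_term in H. simpl in H. unfold Rdiv in *. simpl in H. lra.
Qed.

Lemma sin_quarter (a : R) : 0 <= a -> a <= PI/2 -> a/4 <= sin a.
Proof.
intros H1 H2. pose proof PI_4. pose proof PI_RGT_0.
assert (a <= 2) by lra.
pose proof (sin_cubic a H1 ltac:(lra)). nra.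
Qed.

Lemma sin_para (x : R) : 0 <= x -> x <= PI -> x * (PI - x) / (4 * PI) <= sin x.
Proof.
intros H1 H2. pose proof PI_RGT_0.
destruct (Rle_dec x (PI/2)).
- pose proof (sin_quarter x H1 r).
  apply Rle_trans with (x/4); auto.
  apply Rmult_le_reg_r with (4*PI). lra. field_simplify; nra.
- rewrite <- sin_PI_x. pose proof (sin_quarter (PI - x) ltac:(lra) ltac:(lra)).
  apply Rle_trans with ((PI - x)/4); auto.
  apply Rmult_le_reg_r with (4*PI). lra. field_simplify; nra.
Qed.

Lemma sin_ge_first (a x : R) : 0 < a -> a <= PI/2 -> a <= x -> x <= PI - a ->
  sin a <= sin x.
Proof.
intros. pose proof PI_RGT_0.
destruct (Rle_dec x (PI/2)).
- apply sin_incr_1; lra.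
- rewrite <- (sin_PI_x x). apply sin_incr_1; lra.
Qed.

Lemma telescope (g V : nat -> R) (a n : nat) :
  (forall k, (a <= k < a + n)%nat -> g k <= V (S k) - V k) ->
  sum_range g a n <= V (a + n)%nat - V a.
Proof.
revert a. induction n as [|n IH]; intros a H; simpl.
- rewrite Nat.add_0_r. lra.
- assert (H1 := H a ltac:(lia)).
  assert (H2 := IH (S a) ltac:(intros k Hk; apply H; lia)).
  replace (a + S n)%nat with (S a + n)%nat by lia. lra.
Qed.

Theorem lemma5p1 (mu : R) (hmu : 1 < mu) :
  forall alpha : R, - mu < alpha ->
  exists gamma : R, 0 < gamma /\
    forall N : nat,
      sum_1_to_Nm1 (fun k => / (nu mu k N + alpha)) N <= gamma.
Proof.
intros alpha Ha.
set (d := Rmin 1 ((mu + alpha) / mu)).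
assert (Hd : 0 < d).
{ unfold d, Rmin. destruct (Rle_dec 1 ((mu + alpha) / mu)). lra.
  apply Rdiv_lt_0_compat; lra. }
assert (Hd1 : d <= 1) by (unfold d; apply Rmin_l).
assert (Hd2 : d * mu <= mu + alpha).
{ assert (d <= (mu+alpha)/mu) by (unfold d; apply Rmin_r).
  apply Rmult_le_compat_r with (r := mu) in H; [|lra].
  replace ((mu + alpha) / mu * mu) with (mu+alpha) in H by (field; lra). lra. }
set (C := 32 / (d * mu)).
assert (HC : 0 < C) by (unfold C; apply Rdiv_lt_0_compat; nra).
exists (4 * C). split; [lra|].
intros N. unfold sum_1_to_Nm1.
destruct (Compare_dec.le_lt_dec N 1) as [HN|HN].
{ replace (N - 1)%nat with 0%nat by lia. simpl. lra. }
set (n := INR N).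
assert (Hn : 2 <= n) by (unfold n; replace 2 with (INR 2) by (simpl; lra); apply le_INR; lia).
set (V := fun j : nat => C * (- 2 / INR j + 2 / (n - INR j + 1))).
apply Rle_trans with (V (1 + (N - 1))%nat - V 1%nat).
2:{ replace (1 + (N - 1))%nat with N by lia. unfold V. fold n. simpl INR.
    replace (n - n + 1) with 1 by ring. replace (n - 1 + 1) with n by ring.
    assert (0 < C * (4 / n)). { apply Rmult_lt_0_compat; auto. apply Rdiv_lt_0_compat; lra. }
    replace (C * (-2 / n + 2 / 1) - C * (-2 / 1 + 2 / n)) with (4*C - C*(4/n)) by (field; lra).
    lra. }
apply telescope. intros k Hk.
assert (Hr1 : 1 <= INR k) by (replace 1 with (INR 1) by (simpl; lra); apply le_INR; lia).
assert (Hrn : INR k + 1 <= n) by (unfold n; rewrite <- S_INR; apply le_INR; lia).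
set (r := INR k) in *.
set (s := n - r).
assert (Hs : 1 <= s) by (unfold s; lra).
pose proof PI_RGT_0 as Hpi.
set (s1 := sin (PI / n)).
set (sk := sin (r * PI / n)).
assert (Hs1 : 0 < s1) by (apply sin_gt_0; [apply Rdiv_lt_0_compat; lra|]; apply Rmult_lt_reg_r with n; [lra|]; field_simplify; nra).
assert (Hs1u : s1 <= PI / n) by (left; apply sin_lt_x; apply Rdiv_lt_0_compat; lra).
assert (Hsk1 : s1 <= sk).
{ apply sin_ge_first.
  - apply Rdiv_lt_0_compat; lra.
  - apply Rmult_le_reg_r with (2*n); [lra|]. field_simplify; nra.
  - apply Rmult_le_reg_r with n; [lra|]. field_simplify; nra.
  - apply Rmult_le_reg_r with n; [lra|]. field_simplify; nra. }
set (P := PI / 4 * r * s / n^2).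
assert (HP0 : 0 < P) by (unfold P; apply Rdiv_lt_0_compat; [|nra]; apply Rmult_lt_0_compat; [|lra]; apply Rmult_lt_0_compat; lra).
assert (HskP : P <= sk).
{ pose proof (sin_para (r * PI / n)) as Hq.
  assert (E : r * PI / n * (PI - r * PI / n) / (4 * PI) = P) by (unfold P, s; field; lra).
  rewrite E in Hq. apply Hq.
  - apply Rmult_le_reg_r with n; [lra|]. field_simplify; nra.
  - apply Rmult_le_reg_r with n; [lra|]. field_simplify; nra. }
assert (Hnu : nu mu k N = mu * sk^2 / s1^2) by reflexivity.
assert (Hnu1 : mu <= nu mu k N).
{ rewrite Hnu. apply Rmult_le_reg_r with (s1^2); [nra|].
  field_simplify; [|lra]. apply Rmult_le_compat_l; [lra|]. apply pow_incr; lra. }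
assert (HnuQ : mu * (r^2 * s^2 / (16 * n^2)) <= nu mu k N).
{ rewrite Hnu. apply Rmult_le_reg_r with (s1^2); [nra|].
  replace (mu * sk ^ 2 / s1 ^ 2 * s1 ^ 2) with (mu * sk^2) by (field; lra).
  assert (P^2 <= sk^2) by (apply pow_incr; lra).
  assert (s1^2 <= (PI/n)^2) by (apply pow_incr; lra).
  assert (E : r ^ 2 * s ^ 2 / (16 * n ^ 2) * (PI/n)^2 = P^2) by (unfold P; field; lra).
  assert (0 <= r ^ 2 * s ^ 2 / (16 * n ^ 2)) by (apply Rle_mult_inv_pos; nra).
  assert (r ^ 2 * s ^ 2 / (16 * n ^ 2) * s1^2 <= P^2) by (rewrite <- E; apply Rmult_le_compat_l; lra).
  nra. }
set (Q := r ^ 2 * s ^ 2 / (16 * n ^ 2)) in *.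
assert (HQ : 0 < Q) by (unfold Q; apply Rdiv_lt_0_compat; [apply Rmult_lt_0_compat; apply pow_lt; lra | apply Rmult_lt_0_compat; [lra| apply pow_lt; lra]]).
set (x := nu mu k N) in *.
assert (Hlow : d * mu * Q <= x + alpha).
{ assert (d * x <= x + alpha).
  { destruct (Rle_dec 0 alpha). nra.
    (* alpha < 0 : x + alpha >= x * (mu+alpha)/mu >= d x *)
    assert (d * mu * x <= (mu + alpha) * x) by nra. nra. }
  nra. }
assert (Hpos : 0 < d * mu * Q) by (apply Rmult_lt_0_compat; nra).
apply Rle_trans with (/ (d * mu * Q)).
{ apply Rinv_le_contravar; lra. }
unfold V. rewrite S_INR. fold r.
replace (n - (r + 1) + 1) with s by (unfold s; ring).
replace (n - r + 1) with (s + 1) by (unfold s; ring).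
assert (Hn' : n = r + s) by (unfold s; ring).
unfold Q, C.
assert (E : C * (-2 / (r + 1) + 2 / s) - C * (-2 / r + 2 / (s + 1))
          = C * (2 / (r * (r+1)) + 2 / (s * (s+1)))) by (field; lra).
unfold C in E. rewrite E.
assert (E2 : / (d * mu * (r ^ 2 * s ^ 2 / (16 * n ^ 2)))
   = 32 / (d * mu) * (1 / r^2 + 1/s^2) - 16 * (r - s)^2 / (d * mu * r^2 * s^2)) by (rewrite Hn'; field; repeat split; nra).
rewrite E2.
assert (0 <= 16 * (r - s)^2 / (d * mu * r^2 * s^2)). { unfold Rdiv. apply Rmult_le_pos. apply Rmult_le_pos; [lra|apply pow2_ge_0]. left. apply Rinv_0_lt_compat. assert (0 < d*mu) by (apply Rmult_lt_0_compat; lra). assert (0 < r^2*s^2) by (apply Rmult_lt_0_compat; apply pow_lt; lra). nra. }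
assert (1 / r^2 <= 2 / (r * (r+1))) by (apply Rmult_le_reg_r with (r^2 * (r+1)); [nra|]; field_simplify; nra).
assert (1 / s^2 <= 2 / (s * (s+1))) by (apply Rmult_le_reg_r with (s^2 * (s+1)); [nra|]; field_simplify; nra).
assert (0 < 32 / (d*mu)) by (apply Rdiv_lt_0_compat; nra).
nra.
Qed.
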